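(* Let $\mathcal{N}(\rho)=\sum_{j\in [J]} R_j\rho R_j^{\dagger}$ be a CPTP map on $\mathcal{B}((\mathbb{C}^{\mathsf{p}})^{\otimes n})$. Let $\mathcal{C}\subset (\mathbb{C}^{\mathsf{p}})^{\otimes n}$ be a subspace with orthonormal basis $\{\psi_\alpha\}_{\alpha\in [K]}$. Define \[ \epsilon_{\mathsf{approx}}:=\max_{\alpha,\beta\in [K]}\sum_{j\in [J]}\big|\langle\psi_\alpha| R_j|\psi_\beta\rangle-\delta_{\alpha,\beta}\langle\psi_1| R_j|\psi_1\rangle\big|^2 . \] Let $\delta>K^5\epsilon_{\mathsf{approx}}$ be arbitrary. Then $\mathcal{C}$ is an $(\epsilon,\delta)$-approximate quantum error-detection code for $\mathcal{N}$ with $\epsilon = K^5\epsilon_{\mathsf{approx}}\, \delta^{-1}$.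
   Context: Let $P$ be the orthogonal projection onto a subspace $\mathcal{C}\subset(\mathbb{C}^\mathsf{p})^{\otimes n}$ and $\mathcal{N}$ a CPTP map on $\mathcal{B}((\mathbb{C}^\mathsf{p})^{\otimes n})$. $\mathcal{C}$ is called an $(\epsilon,\delta)$-approximate error-detection code for $\mathcal{N}$ if for every unit vector $|\Psi\rangle\in\mathcal{C}$ the following holds: if $\mathrm{tr}(P\mathcal{N}(|\Psi\rangle\langle\Psi|))\geq\delta$ then $\langle\Psi|\rho_{\mathcal{N},P}|\Psi\rangle\geq 1-\epsilon$, where $\rho_{\mathcal{N},P}=\mathrm{tr}(P\mathcal{N}(|\Psi\rangle\langle\Psi|))^{-1}\, P\mathcal{N}(|\Psi\rangle\langle\Psi|)P$. Here $[K]=\{1,\dots,K\}$. *)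

(* Defs.v *)
From HB Require Import structures.
From mathcomp Require Import all_boot all_order all_algebra.
From mathcomp Require Import reals.
From mathcomp Require Import complex.
Set Implicit Arguments. Unset Strict Implicit. Unset Printing Implicit Defensive.
Import Order.TTheory GRing.Theory Num.Theory.
Local Open Scope ring_scope.

(* Scalars: complex numbers R[i] over a real type R.
   The Hilbert space (C^p)^{\otimes n} is identified with C^(p^n),
   vectors are column vectors 'cV[R[i]]_(p^n), operators 'M[R[i]]_(p^n). *)

Section Defs.
Variable R : realType.
Local Notation C := (R[i]).

Definition adj m n (A : 'M[C]_(m, n)) : 'M[C]_(n, m) := (map_mx (@conjc R) A)^T.

Definition kraus_map D J (Rs : 'I_J -> 'M[C]_D) (rho : 'M[C]_D) : 'M[C]_D :=
  \sum_(j < J) (Rs j *m rho *m adj (Rs j)).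

(* trace preservation of the Kraus map (complete positivity is automatic
   for a map in Kraus form) *)
Definition kraus_TP D J (Rs : 'I_J -> 'M[C]_D) : Prop :=
  \sum_(j < J) (adj (Rs j) *m Rs j) = 1%:M.

Definition inner D (u v : 'cV[C]_D) : C := (adj u *m v) 0 0.

Definition orthonormal_family D K (psi : 'I_K -> 'cV[C]_D) : Prop :=
  forall a b : 'I_K, inner (psi a) (psi b) = (a == b)%:R.

Definition in_span D K (psi : 'I_K -> 'cV[C]_D) (v : 'cV[C]_D) : Prop :=
  exists c : 'I_K -> C, v = \sum_(a < K) c a *: psi a.

Definition span_proj D K (psi : 'I_K -> 'cV[C]_D) : 'M[C]_D :=
  \sum_(a < K) (psi a *m adj (psi a)).

Definition approx_detection_code D (inC : 'cV[C]_D -> Prop) (P : 'M[C]_D)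
    (N : 'M[C]_D -> 'M[C]_D) (eps delta : R) : Prop :=
  forall Psi : 'cV[C]_D, inC Psi -> inner Psi Psi = 1 ->
    let NP := N (Psi *m adj Psi) in
    let t := \tr (P *m NP) in
    delta <= complex.Re t ->
    1 - eps <= complex.Re (inner Psi ((t^-1 *: (P *m NP *m P)) *m Psi)).

Definition sqmod (z : C) : R := complex.Re z ^+ 2 + complex.Im z ^+ 2.

Definition eps_approx D J K (hK : (0 < K)%N) (Rs : 'I_J -> 'M[C]_D)
    (psi : 'I_K -> 'cV[C]_D) : R :=
  let psi1 := psi (Ordinal hK) in
  \big[Num.max/0]_(a < K) \big[Num.max/0]_(b < K)
    \sum_(j < J) sqmod (inner (psi a) (Rs j *m psi b)
                         - (a == b)%:R * inner psi1 (Rs j *m psi1)).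
End Defs.

(* Main.v *)
Require Import Defs.
From HB Require Import structures.
From mathcomp Require Import all_boot all_order all_algebra.
From mathcomp Require Import reals complex ring lra.
Import Order.TTheory GRing.Theory Num.Theory.
Local Open Scope ring_scope.

Section Scal.
Variable R : realType.
Local Notation C := (R[i]).
Definition nrm (z : C) : C := z * conjc z.

Lemma nrm_ge0 z : 0 <= nrm z.
Proof. exact: mulcJ_ge0. Qed.

Lemma nrm_conj z : nrm (conjc z) = nrm z.
Proof. by rewrite /nrm conjcK mulrC. Qed.

Lemma nrm0 : nrm 0 = 0.
Proof. by rewrite /nrm mul0r. Qed.

Lemma key_id K (c x : 'I_K -> C) (lam : C) :
  \sum_a c a * conjc (c a) = 1 ->
  let g := \sum_a conjc (c a) * x a in
  \sum_a nrm (x a - lam * c a) = \sum_a nrm (x a) - nrm g + nrm (g - lam).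
Proof.
move=> hc g.
have e1 : \sum_a nrm (x a - lam * c a) =
   \sum_a nrm (x a) - conjc lam * \sum_a (conjc (c a) * x a)
   - lam * \sum_a (c a * conjc (x a)) + lam * conjc lam * \sum_a (c a * conjc (c a)).
  rewrite !mulr_sumr -!sumrB -big_split /=; apply: eq_bigr => a _.
  rewrite /nrm rmorphB rmorphM /=; ring.
have e2 : conjc g = \sum_a c a * conjc (x a).
  rewrite /g rmorph_sum; apply: eq_bigr => a _; by rewrite rmorphM /= conjcK.
rewrite e1 hc -e2 -/g /nrm !rmorphB /=; ring.
Qed.

Lemma cs K (c x : 'I_K -> C) :
  \sum_a c a * conjc (c a) = 1 ->
  nrm (\sum_a conjc (c a) * x a) <= \sum_a nrm (x a).
Proof.
move=> hc; have := @key_id K c x (\sum_a conjc (c a) * x a) hc => /=.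
rewrite subrr nrm0 addr0 => e.
rewrite -subr_ge0 -e; apply: sumr_ge0 => a _; exact: nrm_ge0.
Qed.

Lemma proj_le K (c x : 'I_K -> C) (lam : C) :
  \sum_a c a * conjc (c a) = 1 ->
  \sum_a nrm (x a) - nrm (\sum_a conjc (c a) * x a) <= \sum_a nrm (x a - lam * c a).
Proof.
move=> hc; rewrite (@key_id K c x lam hc) /= lerDl; exact: nrm_ge0.
Qed.

Lemma core K J (c : 'I_K -> C) (m : 'I_J -> 'I_K -> 'I_K -> C) (lam : 'I_J -> C) (eps : C) :
  \sum_a c a * conjc (c a) = 1 ->
  (forall a b, \sum_j nrm (m j a b - (a == b)%:R * lam j) <= eps) ->
  \sum_j \sum_a nrm (\sum_b c b * m j a b)
  - \sum_j nrm (\sum_a conjc (c a) * \sum_b c b * m j a b) <= eps *+ K *+ K.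
Proof.
move=> hc he.
set e := fun j a b => m j a b - (a == b)%:R * lam j.
have step : forall j, \sum_a nrm (\sum_b c b * m j a b)
  - nrm (\sum_a conjc (c a) * \sum_b c b * m j a b) <= \sum_a \sum_b nrm (e j a b).
  move=> j; apply: le_trans (@proj_le K c _ (lam j) hc) _.
  apply: ler_sum => a _.
  have -> : \sum_b c b * m j a b - lam j * c a = conjc (\sum_b conjc (c b) * conjc (e j a b)).
    rewrite rmorph_sum /=.
    under [RHS]eq_bigr => b _ do rewrite rmorphM /= !conjcK.
    rewrite /e; under [RHS]eq_bigr => b _ do rewrite mulrBr.
    rewrite sumrB; congr (_ - _).
    rewrite (bigD1 a) //= eqxx big1 ?addr0; first by rewrite mul1r mulrC.
    by move=> b /negbTE; rewrite eq_sym => ->; rewrite mul0r mulr0.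
  rewrite nrm_conj; apply: le_trans (@cs K c _ hc) _.
  by under eq_bigr => b _ do rewrite nrm_conj.
rewrite -sumrB; apply: le_trans (ler_sum _ (fun j _ => step j)) _.
rewrite exchange_big /=.
apply: le_trans (_ : \sum_(a < K) eps *+ K <= _); last first.
  by rewrite sumr_const card_ord.
apply: ler_sum => a _; rewrite exchange_big /=.
have -> : eps *+ K = \sum_(b < K) eps by rewrite sumr_const card_ord.
by apply: ler_sum => b _; apply: he.
Qed.
End Scal.
Arguments nrm {R}.
Lemma arith (R : realType) (K : nat) (eps delta Tr Br : R) :
  (0 < K)%N -> 0 <= eps -> delta <= Tr -> K%:R ^+ 5 * eps < delta ->
  Tr - Br <= eps *+ K *+ K ->
  1 - K%:R ^+ 5 * eps / delta <= Tr^-1 * Br.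
Proof.
move=> hK he hd hkd hb.
have k1 : 1 <= (K%:R : R) by rewrite ler1n.
have k3 : 1 <= (K%:R : R) ^+ 3 by rewrite exprn_ege1.
have k25 : (K%:R : R) ^+ 2 * eps <= K%:R ^+ 5 * eps.
  rewrite ler_wpM2r // (_ : 5 = 2 + 3)%N // exprD.
  by apply: ler_peMr => //; apply: exprn_ge0; apply: le_trans k1.
have hb' : Tr - Br <= K%:R ^+ 2 * eps by rewrite expr2 -natrM mulr_natl mulrnA.
have d0 : 0 < delta by apply: le_lt_trans hkd; rewrite mulr_ge0 // exprn_ge0 // ler0n.
have T0 : 0 < Tr by apply: lt_le_trans hd.
set q := K%:R ^+ 5 * eps / delta.
have hq : q * delta = K%:R ^+ 5 * eps by rewrite /q divfK // gt_eqF.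
have q0 : 0 <= q by rewrite /q divr_ge0 ?mulr_ge0 ?exprn_ge0 ?ler0n // ltW.
rewrite mulrC ler_pdivlMr //.
nra.
Qed.
Section Mat.
Variable R : realType.
Local Notation C := (R[i]).

Lemma adjE m n (A : 'M[C]_(m, n)) i j : adj A i j = conjc (A j i).
Proof. by rewrite /adj !mxE. Qed.

Lemma adjM m n p (A : 'M[C]_(m, n)) (B : 'M[C]_(n, p)) : adj (A *m B) = adj B *m adj A.
Proof. by rewrite /adj map_mxM trmx_mul. Qed.

Lemma adjK m n (A : 'M[C]_(m, n)) : adj (adj A) = A.
Proof. by apply/matrixP => i j; rewrite !adjE conjcK. Qed.

Lemma adj_sum m n I (r : seq I) (F : I -> 'M[C]_(m, n)) :
  adj (\sum_(i <- r) F i) = \sum_(i <- r) adj (F i).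
Proof.
apply/matrixP => i j; rewrite /adj !mxE !summxE rmorph_sum; apply: eq_bigr => k _.
by rewrite !mxE.
Qed.

Lemma adjZ m n (a : C) (A : 'M[C]_(m, n)) : adj (a *: A) = conjc a *: adj A.
Proof. by apply/matrixP => i j; rewrite /adj !mxE rmorphM. Qed.

Lemma mx11M (X Y : 'M[C]_1) : (X *m Y) 0 0 = X 0 0 * Y 0 0.
Proof. by rewrite mxE big_ord1. Qed.

Lemma inner_conj D (u v : 'cV[C]_D) : inner v u = conjc (inner u v).
Proof.
rewrite /inner /adj !mxE rmorph_sum; apply: eq_bigr => k _.
by rewrite !mxE rmorphM /= conjcK mulrC.
Qed.

Lemma inner_suml D K (c : 'I_K -> C) (u : 'I_K -> 'cV[C]_D) w :
  inner (\sum_a c a *: u a) w = \sum_a conjc (c a) * inner (u a) w.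
Proof.
rewrite /inner adj_sum mulmx_suml summxE; apply: eq_bigr => a _.
by rewrite adjZ -scalemxAl mxE.
Qed.

Lemma inner_sumr D K (c : 'I_K -> C) (u : 'I_K -> 'cV[C]_D) w :
  inner w (\sum_a c a *: u a) = \sum_a c a * inner w (u a).
Proof.
rewrite /inner mulmx_sumr summxE; apply: eq_bigr => a _.
by rewrite -scalemxAr mxE.
Qed.

End Mat.
Lemma sqmodE (R : realType) (z : R[i]) : (sqmod z)%:C%C = z * conjc z.
Proof.
case: z => x y; rewrite /sqmod /=; simpc. apply/eqP; rewrite eq_complex /=; apply/andP; split; apply/eqP; ring.
Qed.
Lemma sum_sqmodE (R : realType) J (f : 'I_J -> R[i]) :
  (\sum_j sqmod (f j))%:C%C = \sum_j nrm (f j).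
Proof. rewrite rmorph_sum; apply: eq_bigr => j _; exact: sqmodE. Qed.

Lemma tr11 (R : realType) (A : 'M[R[i]]_1) : \tr A = A 0 0.
Proof. by rewrite /mxtrace big_ord1. Qed.
Lemma re (R : realType) (r : R) : complex.Re (r%:C)%C = r.
Proof. by []. Qed.

Theorem theorem1 (R : realType) (p n J K : nat) (hK : (0 < K)%N)
    (Rs : 'I_J -> 'M[R[i]]_(p ^ n)) (psi : 'I_K -> 'cV[R[i]]_(p ^ n)) :
  kraus_TP Rs ->
  orthonormal_family psi ->
  forall delta : R,
    (K%:R ^+ 5 * eps_approx hK Rs psi < delta) ->
    approx_detection_code (in_span psi) (span_proj psi) (kraus_map Rs)
      (K%:R ^+ 5 * eps_approx hK Rs psi / delta) delta.
Proof.
move=> _ hon delta hd.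
rewrite /approx_detection_code => Psi [c hPsi] hnorm /= hdt.
set P := span_proj psi.
have F1 : forall a, inner (psi a) Psi = c a.
  move=> a; rewrite hPsi inner_sumr (bigD1 a) //= hon eqxx mulr1 big1 ?addr0 //.
  by move=> b hb; rewrite hon eq_sym (negbTE hb) mulr0.
have F2 : \sum_a c a * conjc (c a) = 1.
  rewrite -hnorm {1}hPsi inner_suml; apply: eq_bigr => a _; by rewrite F1 mulrC.
have F3 : P *m Psi = Psi.
  rewrite /P /span_proj mulmx_suml [RHS]hPsi; apply: eq_bigr => a _.
  rewrite -mulmxA [adj (psi a) *m Psi]mx11_scalar mul_mx_scalar.
  by rewrite -[(_ *m Psi) 0 0]/(inner (psi a) Psi) F1.
have adjP : adj P = P.
  rewrite /P /span_proj adj_sum; apply: eq_bigr => a _; by rewrite adjM adjK.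
have F4 : adj Psi *m P = adj Psi by rewrite -adjP -adjM F3.
set v := fun j => Rs j *m Psi.
have F5 : kraus_map Rs (Psi *m adj Psi) = \sum_j v j *m adj (v j).
  rewrite /kraus_map; apply: eq_bigr => j _; by rewrite /v adjM !mulmxA.
have trl : forall D (u w : 'cV[R[i]]_D),
    \tr ((adj u *m w) *m (adj w *m u)) = nrm (inner u w).
  by move=> D u w; rewrite tr11 mx11M /nrm -inner_conj.
have F6 : \tr (P *m \sum_j v j *m adj (v j)) = \sum_j \sum_a nrm (inner (psi a) (v j)).
  rewrite mulmx_sumr raddf_sum; apply: eq_bigr => j _.
  rewrite /P /span_proj mulmx_suml raddf_sum; apply: eq_bigr => a _.
  rewrite /= -mulmxA mxtrace_mulC (mulmxA (adj (psi a)) (v j)) -(mulmxA (adj (psi a) *m v j)); exact: trl.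
have F7 : forall s, inner Psi ((s *: (P *m (\sum_j v j *m adj (v j)) *m P)) *m Psi)
    = s * \sum_j nrm (inner Psi (v j)).
  move=> s; rewrite /inner -scalemxAl -scalemxAr mxE; congr (_ * _).
  rewrite -mulmxA F3 !mulmxA F4 mulmx_sumr mulmx_suml summxE; apply: eq_bigr => j _.
  rewrite (mulmxA (adj Psi) (v j)) -(mulmxA (adj Psi *m v j)) mx11M /nrm; congr (_ * _); exact: inner_conj.
have F8 : forall j a, inner (psi a) (v j) = \sum_b c b * inner (psi a) (Rs j *m psi b).
  move=> j a; rewrite /v hPsi mulmx_sumr.
  under eq_bigr do rewrite -scalemxAr.
  by rewrite inner_sumr.
have F9 : forall j, inner Psi (v j) = \sum_a conjc (c a) * inner (psi a) (v j).
  by move=> j; rewrite {1}hPsi inner_suml.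
rewrite F5 F6 F7.
rewrite F5 F6 in hdt.
set T := \sum_j \sum_a nrm (inner (psi a) (v j)).
set Bn := \sum_j nrm (inner Psi (v j)).
set eps := eps_approx hK Rs psi.
have hm : forall a b, \sum_j sqmod (inner (psi a) (Rs j *m psi b)
       - (a == b)%:R * inner (psi (Ordinal hK)) (Rs j *m psi (Ordinal hK))) <= eps.
  move=> a b; rewrite /eps /eps_approx.
  apply: le_trans (le_bigmax _ _ a).
  exact: (le_bigmax _ (fun b => \sum_j sqmod (inner (psi a) (Rs j *m psi b)
       - (a == b)%:R * inner (psi (Ordinal hK)) (Rs j *m psi (Ordinal hK)))) b).
have eps0 : 0 <= eps.
  apply: le_trans (hm (Ordinal hK) (Ordinal hK)).
  by apply: sumr_ge0 => j _; rewrite /sqmod addr_ge0 // sqr_ge0.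
have hcore : T - Bn <= (eps%:C)%C *+ K *+ K.
  have eT : T = \sum_j \sum_a nrm (\sum_b c b * inner (psi a) (Rs j *m psi b)).
    by apply: eq_bigr => j _; apply: eq_bigr => a _; rewrite F8.
  have eB : Bn = \sum_j nrm (\sum_a conjc (c a) * \sum_b c b * inner (psi a) (Rs j *m psi b)).
    apply: eq_bigr => j _; rewrite F9; congr nrm; apply: eq_bigr => a _; by rewrite F8.
  rewrite eT eB.
  apply: (@core R K J c (fun j a b => inner (psi a) (Rs j *m psi b))
            (fun j => inner (psi (Ordinal hK)) (Rs j *m psi (Ordinal hK))) _ F2).
  move=> a b; have := hm a b; rewrite -lecR sum_sqmodE; exact.
have T0 : 0 <= T by apply: sumr_ge0 => j _; apply: sumr_ge0 => a _; exact: nrm_ge0.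
have B0 : 0 <= Bn by apply: sumr_ge0 => j _; exact: nrm_ge0.
have eT : T = (complex.Re T)%:C%C by rewrite RRe_real // ger0_real.
have eB : Bn = (complex.Re Bn)%:C%C by rewrite RRe_real // ger0_real.
have hdt' : delta <= complex.Re T by exact: hdt.
move: hcore hdt'; rewrite eT eB.
clearbody T Bn; generalize (complex.Re T) (complex.Re Bn) => Tr Br.
clear -hd eps0 hK.
move=> hcore; rewrite re => hdt.
have h1 : Tr - Br <= eps *+ K *+ K.
  by rewrite -lecR rmorphB !rmorphMn.
have h2 : ((Tr%:C)%C^-1 * (Br%:C)%C) = ((Tr^-1 * Br)%:C)%C.
  by rewrite rmorphM fmorphV.
rewrite h2 re.
exact: arith.
Qed.
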